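(* Let $k\ge 2$ and $\Delta\ge 2$ be integers. For $n\ge 0$ let $p_n=\mu_n(\sigma_\rho=1\mid \sigma_{L_n}=1)$, where $\sigma_{L_n}=1$ means that every vertex of $L_n$ is in the independent set. Then the independent set model has uniqueness on $\mathbb{T}_{k,\Delta}$ if and only if $\limsup_{n\to\infty}|p_{n+1}-p_n|=0$.
   Context: $\mathbb{T}_{k,\Delta}$ is the infinite $(\Delta-1)$-ary $k$-uniform hypertree with root $\rho$: recursively, each vertex has $\Delta-1$ descending hyperedges, each consisting of that vertex together with $k-1$ new vertices (its children). For $n\ge 0$, $\mathbb{T}(n)$ is the finite sub-hypergraph induced by the vertices at distance at most $n$ from $\rho$ (i.e. the first $n$ generations below $\rho$), with vertex set $V_n$, and $L_n$ is the set of vertices at distance exactly $n$ from $\rho$ (its leaves). Independent sets of a hypergraph are vertex subsets containing no hyperedge; an independent set $I$ is identified with $\sigma:V_n\to\{0,1\}$, $\sigma(v)=1$ iff $v\in I$. $\mu_n$ is the uniform distribution on independent sets of $\mathbb{T}(n)$. The independent set model has uniqueness on $\mathbb{T}_{k,\Delta}$ iff $\limsup_{n\to\infty}\max_{\eta,\eta':L_n\to\{0,1\}}|\mu_n(\sigma_\rho=1\mid\sigma_{L_n}=\eta)-\mu_n(\sigma_\rho=1\mid\sigma_{L_n}=\eta')|=0$, where $\sigma_\rho$ is the spin of the root and $\sigma_{L_n}$ the restriction of $\sigma$ to $L_n$. *)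

(* Defs.v *)
From HB Require Import structures.
From mathcomp Require Import all_boot all_order all_algebra.
From mathcomp Require Import all_classical all_reals all_analysis.
Set Implicit Arguments. Unset Strict Implicit. Unset Printing Implicit Defensive.
Import Order.TTheory GRing.Theory Num.Theory.
Local Open Scope ring_scope.

(* Vertices of the (Delta-1)-ary k-uniform hypertree T_{k,Delta} are words over
   the alphabet  step = 'I_(Delta-1) * 'I_(k-1):  the root rho is the empty
   word, and the k-1 children of w in its e-th descending hyperedge are the
   words  rcons w (e, c)  for c : 'I_(k-1).  The distance from rho is the
   length of the word. *)
Definition step (k D : nat) : finType := ('I_D.-1 * 'I_k.-1)%type.

Fixpoint allw (A : finType) (n : nat) : seq (seq A) :=
  if n is m.+1 then [::] :: [seq a :: w | a <- enum A, w <- allw A m]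
  else [:: [::]].

Definition vert (k D n : nat) : finType := seq_sub (allw (step k D) n).

Definition inI (k D n : nat) (I : {set vert k D n}) (w : seq (step k D)) : bool :=
  [exists v in I, val v == w].

(* The
   hyperedges of the induced sub-hypergraph T(n) are the descending hyperedges
   {w} \cup {rcons w (e,c) | c} of the vertices w with |w| < n. *)
Definition indep (k D n : nat) (I : {set vert k D n}) : bool :=
  [forall v : vert k D n, forall e : 'I_D.-1,
     (size (val v) < n)%N ==>
     ~~ (inI I (val v) && [forall c : 'I_k.-1, inI I (rcons (val v) (e, c))])].

(* sigma_{L_n} = eta, where L_n = vertices at distance exactly n *)
Definition agree (k D n : nat) (I : {set vert k D n}) (eta : {ffun vert k D n -> bool}) : bool :=
  [forall v : vert k D n, (size (val v) == n) ==> ((v \in I) == eta v)].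

(* mu_n(sigma_rho = 1 | sigma_{L_n} = eta), mu_n uniform on independent sets *)
Definition condprob (R : realType) (k D n : nat) (eta : {ffun vert k D n -> bool}) : R :=
  (#|[set I : {set vert k D n} | [&& indep I, agree I eta & inI I [::]]]|%:R)
  / (#|[set I : {set vert k D n} | indep I && agree I eta]|%:R).

Definition maxdiff (R : realType) (k D n : nat) : R :=
  \big[Num.max/0]_(eta : {ffun vert k D n -> bool})
    \big[Num.max/0]_(eta' : {ffun vert k D n -> bool})
      `|condprob R eta - condprob R eta'|.

Definition uniqueness (R : realType) (k D : nat) : Prop :=
  limn_sup (fun n => maxdiff R k D n) = 0.

Definition pn (R : realType) (k D n : nat) : R :=
  condprob R [ffun _ : vert k D n => true].

(* Main.v *)
Require Import Defs.
From HB Require Import structures.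
From mathcomp Require Import all_boot all_order all_algebra.
From mathcomp Require Import all_classical all_reals all_analysis.
Import Order.TTheory GRing.Theory Num.Theory.
Local Open Scope ring_scope.
Set Implicit Arguments. Unset Strict Implicit.

Lemma mem_allw (A : finType) n (w : seq A) : (w \in allw A n) = (size w <= n)%N.
Proof.
elim: n w => [|n IH] [|a w] //=.
rewrite in_cons /= ltnS -IH; apply/allpairsP/idP => [[[x y] /= [_ Hy [Ea Ew]]]|H]; first by subst.
by exists (a, w); rewrite mem_enum.
Qed.

Lemma inI_val k D n (I : {set vert k D n}) (v : vert k D n) w :
  val v = w -> inI I w = (v \in I).
Proof.
move=> <-; apply/existsP/idP => [[u /andP [Hu /eqP /val_inj <-]] //|H].
by exists v; rewrite H eqxx.
Qed.

Lemma inI_set k D n (p : pred (seq (step k D))) w :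
  inI [set v : vert k D n | p (val v)] w = (size w <= n)%N && p w.
Proof.
apply/existsP/andP => [[u /andP [Hu /eqP <-]]|[Hs Hp]].
  by split; [rewrite -mem_allw; exact: ssvalP | rewrite inE in Hu].
have Hw : w \in allw (step k D) n by rewrite mem_allw.
by exists (SeqSub Hw); rewrite inE /= Hp eqxx.
Qed.

Lemma inI_size k D n (I : {set vert k D n}) w : inI I w -> (size w <= n)%N.
Proof. by case/existsP => u /andP [_ /eqP <-]; rewrite -mem_allw; exact: ssvalP. Qed.

Lemma indepP k D n (I : {set vert k D n}) :
  reflect (forall w e, (size w < n)%N ->
     ~~ (inI I w && [forall c : 'I_k.-1, inI I (rcons w (e, c))])) (indep I).
Proof.
apply: (iffP forallP) => [H w e Hs|H v].
  have Hw : w \in allw (step k D) n by rewrite mem_allw ltnW.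
  by move/forallP: (H (SeqSub Hw)) => /(_ e) /implyP; apply.
by apply/forallP => e; apply/implyP => Hs; apply: H.
Qed.

Definition agreeW k D n (I : {set vert k D n}) (g : seq (step k D) -> bool) : bool :=
  [forall v : vert k D n, (size (val v) == n) ==> ((v \in I) == g (val v))].

Lemma agreeWP k D n (I : {set vert k D n}) g :
  reflect (forall w, size w = n -> inI I w = g w) (agreeW I g).
Proof.
apply: (iffP forallP) => [H w Hs|H v].
  have Hw : w \in allw (step k D) n by rewrite mem_allw Hs.
  move/implyP: (H (SeqSub Hw)); rewrite /= Hs eqxx => /(_ isT) /eqP <-.
  exact: inI_val.
apply/implyP => /eqP Hs; apply/eqP; rewrite -(H _ Hs); symmetry; exact: inI_val.
Qed.

Definition etaW k D n (eta : {ffun vert k D n -> bool}) (w : seq (step k D)) : bool :=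
  [exists v, (val v == w) && eta v].

Lemma agreeE k D n (I : {set vert k D n}) eta : agree I eta = agreeW I (etaW eta).
rewrite /agree /agreeW; apply: eq_forallb => v.
congr (_ ==> (_ == _)). rewrite /etaW; apply/esym.
apply/existsP/idP => [[u /andP [/eqP /val_inj -> //]]|H].
by exists v; rewrite eqxx.
Qed.
Lemma vsize k D n (v : vert k D n) : (size (val v) <= n)%N.
Proof. rewrite -mem_allw; exact: ssvalP. Qed.

Definition phiP k D n (b : bool) (F : {ffun 'I_D.-1 -> {ffun 'I_k.-1 -> {set vert k D n}}})
  (w : seq (step k D)) : bool :=
  match w with [::] => b | a :: w' => inI (F a.1 a.2) w' end.

Definition phi k D n b (F : {ffun 'I_D.-1 -> {ffun 'I_k.-1 -> {set vert k D n}}}) :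
  {set vert k D n.+1} := [set v : vert k D n.+1 | phiP b F (val v)].

Definition psi k D n (J : {set vert k D n.+1}) :
  bool * {ffun 'I_D.-1 -> {ffun 'I_k.-1 -> {set vert k D n}}} :=
  (inI J [::], [ffun e => [ffun c => [set u : vert k D n | inI J ((e, c) :: val u)]]]).

Lemma inI_phi k D n b (F : {ffun 'I_D.-1 -> {ffun 'I_k.-1 -> {set vert k D n}}}) w :
  inI (phi b F) w = (size w <= n.+1)%N && phiP b F w.
Proof. exact: inI_set. Qed.

Lemma phiK k D n : cancel (fun p => @phi k D n p.1 p.2) (@psi k D n).
Proof.
case=> b F; rewrite /psi inI_phi /=; congr pair; apply/ffunP => e; rewrite ffunE.
apply/ffunP => c; rewrite ffunE; apply/setP => u; rewrite inE inI_phi /= ltnS vsize /=.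
exact: inI_val.
Qed.

Lemma psiK k D n : cancel (@psi k D n) (fun p => @phi k D n p.1 p.2).
Proof.
move=> J; apply/setP => v; rewrite inE /= /phiP.
have := vsize v; rewrite /=; case E: (ssval v) => [|[e c] w] Hs /=.
  by rewrite (inI_val _ E).
by rewrite !ffunE (@inI_set k D n (fun w => inI J ((e, c) :: w))); move: Hs; rewrite /= ltnS => ->; rewrite (inI_val _ E).
Qed.

Lemma indep_phi k D n b (F : {ffun 'I_D.-1 -> {ffun 'I_k.-1 -> {set vert k D n}}}) :
  indep (phi b F) = (b ==> [forall e, ~~ [forall c, inI (F e c) [::]]])
                    && [forall e, forall c, indep (F e c)].
Proof.
apply/indepP/andP => [H|[Hb /forallP HF] w e Hs].
- split.
  + apply/implyP => Hbt; apply/forallP => e; apply/negP => /forallP Hc.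
    move/negP: (H [::] e isT); apply; rewrite inI_phi Hbt /=.
    by apply/forallP => c; rewrite inI_phi /=.
  + apply/forallP => e; apply/forallP => c; apply/indepP => w e' Hs.
    apply/negP => /andP [Hw /forallP Hc].
    have Hs' : (size ((e, c) :: w) < n.+1)%N by [].
    move/negP: (H ((e, c) :: w) e' Hs'); apply.
    rewrite inI_phi /= Hw ltnS (ltnW Hs) /=.
    by apply/forallP => c'; rewrite inI_phi /= size_rcons Hc ltnS Hs.
- case: w Hs => [|[e' c'] w] Hs.
  + apply/negP => /andP [Hr /forallP Hc]; rewrite inI_phi /= in Hr.
    move/implyP: Hb => /(_ Hr) /forallP /(_ e) /negP; apply.
    by apply/forallP => c; have := Hc c; rewrite inI_phi.
  + rewrite /= ltnS in Hs.
    apply/negP => /andP [Hr /forallP Hc].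
    move/forallP: (HF e') => /(_ c') /indepP /(_ w e Hs) /negP; apply.
    rewrite inI_phi /= in Hr; case/andP: Hr => _ -> /=.
    by apply/forallP => c; have := Hc c; rewrite inI_phi /= => /andP [].
Qed.

Definition gs k D (g : seq (step k D) -> bool) (e : 'I_D.-1) (c : 'I_k.-1) :=
  fun w => g ((e, c) :: w).

Lemma agree_phi k D n b (F : {ffun 'I_D.-1 -> {ffun 'I_k.-1 -> {set vert k D n}}}) g :
  agreeW (phi b F) g =
  [forall e, forall c, agreeW (F e c) (gs g e c)].
Proof.
apply/agreeWP/forallP => [H e|H w Hs].
  apply/forallP => c; apply/agreeWP => w Hs.
  by rewrite /gs -H /= ?Hs // inI_phi /= ltnS Hs leqnn.
case: w Hs => [|[e c] w] //= [Hs].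
move/forallP: (H e) => /(_ c) /agreeWP /(_ w Hs); rewrite /gs => <-.
by rewrite inI_phi /= ltnS Hs leqnn.
Qed.
Definition Nr (R : realType) k D n (g : seq (step k D) -> bool) : R :=
  \sum_(I : {set vert k D n}) (indep I && agreeW I g)%:R.
Definition Mr (R : realType) k D n (g : seq (step k D) -> bool) : R :=
  \sum_(I : {set vert k D n}) ((indep I && agreeW I g) && inI I [::])%:R.
Definition qq (R : realType) (k D n : nat) (g : seq (step k D) -> bool) : R := Mr R n g / Nr R n g.

Lemma card_sumR (R : realType) (T : finType) (P : pred T) :
  (#|[set x | P x]|%:R : R) = \sum_x (P x)%:R.
Proof.
rewrite -sum1_card natr_sum big_mkcond /=; apply: eq_bigr => x _.
by rewrite inE; case: (P x).
Qed.

Lemma condprobE (R : realType) k D n (eta : {ffun vert k D n -> bool}) :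
  condprob R eta = qq R n (etaW eta).
Proof.
rewrite /condprob /qq /Mr /Nr !card_sumR.
by congr (_ / _); apply: eq_bigr => I _; rewrite agreeE ?andbA.
Qed.

Lemma natr_and (R : realType) (a b : bool) : ((a && b)%:R : R) = a%:R * b%:R.
Proof. by case: a; case: b; rewrite ?mul1r ?mul0r. Qed.

Lemma natr_not (R : realType) (a : bool) : ((~~ a)%:R : R) = 1 - a%:R.
Proof. by case: a; rewrite ?subrr ?subr0. Qed.

Lemma natr_forall (R : realType) (I : finType) (P : pred I) :
  ([forall i, P i]%:R : R) = \prod_i (P i)%:R.
Proof.
case: (boolP [forall i, P i]) => [/forallP H|/forallPn [i Hi]].
  by rewrite big1 // => i _; rewrite H.
by rewrite (bigD1 i) //= (negbTE Hi) mul0r.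
Qed.

Lemma sum_prod_ffun (R : realType) (I J : finType) (G : I -> J -> R) :
  \sum_(f : {ffun I -> J}) \prod_i G i (f i) = \prod_i \sum_j G i j.
Proof. by rewrite bigA_distr_bigA. Qed.

Lemma sum_phi (R : realType) k D n (h : {set vert k D n.+1} -> R) :
  \sum_J h J = \sum_(b : bool) \sum_F h (phi b F).
Proof.
rewrite (reindex (fun p => @phi k D n p.1 p.2)) /=; last first.
  by apply: onW_bij; exists (@psi k D n); [exact: phiK | exact: psiK].
by rewrite pair_big; apply: eq_bigl => -[].
Qed.


Lemma prodMR (R : realType) (I : finType) (F G : I -> R) :
  \prod_i F i * \prod_i G i = \prod_i (F i * G i).
Proof. by rewrite big_split. Qed.

Lemma term_phi (R : realType) k D n b
  (F : {ffun 'I_D.-1 -> {ffun 'I_k.-1 -> {set vert k D n}}}) g :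
  ((indep (phi b F) && agreeW (phi b F) g)%:R : R) =
  if b then \prod_e (\prod_c (indep (F e c) && agreeW (F e c) (gs g e c))%:R
                    - \prod_c ((indep (F e c) && agreeW (F e c) (gs g e c)) && inI (F e c) [::])%:R)
  else \prod_e \prod_c (indep (F e c) && agreeW (F e c) (gs g e c))%:R.
Proof.
rewrite indep_phi agree_phi -andbA.
have -> : [forall e, forall c, indep (F e c)] && [forall e, forall c, agreeW (F e c) (gs g e c)]
   = [forall e, forall c, indep (F e c) && agreeW (F e c) (gs g e c)].
  apply/andP/forallP => [[/forallP H1 /forallP H2] e|H].
    by apply/forallP => c; rewrite (forallP (H1 e)) (forallP (H2 e)).
  split; apply/forallP => e; apply/forallP => c; by have /andP [] := forallP (H e) c.
case: b => /=.
  rewrite natr_and !natr_forall prodMR; apply: eq_bigr => e _.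
  rewrite natr_not !natr_forall mulrBl mul1r prodMR.
  apply: congr2 => //; apply: congr1; apply: eq_bigr => c _; by rewrite [RHS]natr_and mulrC.
rewrite natr_forall; apply: eq_bigr => e _; exact: natr_forall.
Qed.
Lemma sum_two (R : realType) k D n (G1 G2 : 'I_D.-1 -> 'I_k.-1 -> {set vert k D n} -> R) :
  \sum_(F : {ffun 'I_D.-1 -> {ffun 'I_k.-1 -> {set vert k D n}}})
     \prod_e (\prod_c G1 e c (F e c) - \prod_c G2 e c (F e c)) =
  \prod_e (\prod_c \sum_X G1 e c X - \prod_c \sum_X G2 e c X).
Proof.
rewrite (sum_prod_ffun (fun e (f : {ffun 'I_k.-1 -> {set vert k D n}}) =>
   \prod_c G1 e c (f c) - \prod_c G2 e c (f c))).
apply: eq_bigr => e _; rewrite sumrB.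
by rewrite (sum_prod_ffun (G1 e)) (sum_prod_ffun (G2 e)).
Qed.

Lemma sum_one (R : realType) k D n (G1 : 'I_D.-1 -> 'I_k.-1 -> {set vert k D n} -> R) :
  \sum_(F : {ffun 'I_D.-1 -> {ffun 'I_k.-1 -> {set vert k D n}}})
     \prod_e \prod_c G1 e c (F e c) =
  \prod_e \prod_c \sum_X G1 e c X.
Proof.
rewrite (sum_prod_ffun (fun e (f : {ffun 'I_k.-1 -> {set vert k D n}}) =>
   \prod_c G1 e c (f c))).
by apply: eq_bigr => e _; rewrite (sum_prod_ffun (G1 e)).
Qed.

Lemma Nrec (R : realType) k D n g :
  Nr R n.+1 g = \prod_(e : 'I_D.-1) (\prod_(c : 'I_k.-1) Nr R n (gs g e c)
                                   - \prod_c Mr R n (gs g e c))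
              + \prod_e \prod_c Nr R n (gs g e c).
Proof.
rewrite /Nr sum_phi big_bool /=.
under eq_bigr => F _ do rewrite term_phi.
under [X in _ + X]eq_bigr => F _ do rewrite term_phi.
rewrite /=.
rewrite (sum_two (fun e c X => (indep X && agreeW X (gs g e c))%:R)
                 (fun e c X => ((indep X && agreeW X (gs g e c)) && inI X [::])%:R)).
by rewrite (sum_one (fun e c X => (indep X && agreeW X (gs g e c))%:R)).
Qed.

Lemma Mrec (R : realType) k D n g :
  Mr R n.+1 g = \prod_(e : 'I_D.-1) (\prod_(c : 'I_k.-1) Nr R n (gs g e c)
                                   - \prod_c Mr R n (gs g e c)).
Proof.
rewrite /Mr sum_phi big_bool /=.
rewrite [X in _ + X]big1 ?addr0; last by move=> F _; rewrite inI_phi /= andbF.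
under eq_bigr => F _ do rewrite inI_phi /= andbT term_phi.
by rewrite (sum_two (fun e c X => (indep X && agreeW X (gs g e c))%:R)
                 (fun e c X => ((indep X && agreeW X (gs g e c)) && inI X [::])%:R)).
Qed.
Lemma indep0 k D (I : {set vert k D 0}) : indep I.
Proof. by apply/indepP. Qed.

Lemma agree0 k D (I : {set vert k D 0}) g : agreeW I g = (inI I [::] == g [::]).
Proof.
apply/agreeWP/eqP => [H|H [|a w] //]; first exact: H.
Qed.

Lemma sum0 (R : realType) k D (h : {set vert k D 0} -> R) :
  \sum_I h I = \sum_(b : bool) h [set v : vert k D 0 | (fun _ => b) (val v)].
Proof.
rewrite (reindex (fun b => [set v : vert k D 0 | (fun _ => b) (val v)])) //.
apply: onW_bij; exists (fun I => inI I [::]).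
  by move=> b; rewrite inI_set.
move=> I; apply/setP => v; rewrite inE.
have := vsize v; rewrite leqn0 => /nilP E; by rewrite (inI_val _ E).
Qed.

Lemma Nr0 (R : realType) k D g : Nr R (k:=k) (D:=D) 0 g = 1.
Proof.
rewrite /Nr sum0 big_bool !indep0 !agree0 !(@inI_set k D 0 (fun _ => _)) /=.
by case: (g [::]); rewrite /= ?addr0 ?add0r.
Qed.

Lemma Mr0 (R : realType) k D g : Mr R (k:=k) (D:=D) 0 g = (g [::])%:R.
Proof.
rewrite /Mr sum0 big_bool !indep0 !agree0 !(@inI_set k D 0 (fun _ => _)) /=.
by case: (g [::]); rewrite /= ?addr0 ?add0r ?mulr0.
Qed.
From mathcomp Require Import ring lra.

Lemma MN_le (R : realType) k D n g : 0 <= Mr R (k:=k) (D:=D) n g /\ Mr R n g <= Nr R n g.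
Proof.
split; first by apply: sumr_ge0 => I _; exact: ler0n.
by apply: ler_sum => I _; case: (indep I && agreeW I g); case: (inI I [::]).
Qed.

Lemma Npos (R : realType) k D n g : 0 < Nr R (k:=k) (D:=D) n g.
Proof.
elim: n g => [|n IH] g; first by rewrite Nr0 ltr01.
rewrite Nrec.
have h1 : 0 <= \prod_(e : 'I_D.-1) (\prod_(c : 'I_k.-1) Nr R n (gs g e c)
                                   - \prod_c Mr R n (gs g e c)).
  apply: prodr_ge0 => e _; rewrite subr_ge0; apply: ler_prod => c _.
  by have [-> ->] := MN_le R n (gs g e c).
have h2 : 0 < \prod_(e : 'I_D.-1) \prod_(c : 'I_k.-1) Nr R n (gs g e c).
  by apply: prodr_gt0 => e _; apply: prodr_gt0 => c _; exact: IH.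
lra.
Qed.

Definition Fq (R : realType) k D (x : 'I_D.-1 -> 'I_k.-1 -> R) : R :=
  let r := \prod_e (1 - \prod_c x e c) in r / (1 + r).

Lemma q01 (R : realType) k D n g : 0 <= qq R (k:=k) (D:=D) n g <= 1.
Proof.
have [h1 h2] := MN_le R (k:=k) (D:=D) n g; have h3 := Npos R (k:=k) (D:=D) n g.
rewrite /qq; apply/andP; split; first exact: divr_ge0 (ltW h3).
by rewrite ler_pdivrMr // mul1r.
Qed.

Lemma qrec (R : realType) k D n g :
  qq R n.+1 g = Fq (fun (e : 'I_D.-1) (c : 'I_k.-1) => qq R n (gs g e c)).
Proof.
rewrite /qq Nrec Mrec /Fq.
have E : forall e : 'I_D.-1, \prod_(c : 'I_k.-1) Nr R n (gs g e c)
                   - \prod_c Mr R n (gs g e c)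
   = \prod_c Nr R n (gs g e c) * (1 - \prod_c (Mr R n (gs g e c) / Nr R n (gs g e c))).
  move=> e; rewrite prodf_div mulrBr mulr1 mulrCA divff ?mulr1 //.
  by apply/lt0r_neq0/prodr_gt0 => c _; exact: Npos.
rewrite !(eq_bigr _ (fun e _ => E e)).
rewrite -prodMR.
set Z := \prod_e \prod_c Nr R n (gs g e c).
set r := \prod_e (1 - _).
have hZ : 0 < Z by apply: prodr_gt0 => e _; apply: prodr_gt0 => c _; exact: Npos.
have hr : 0 <= r.
  apply: prodr_ge0 => e _; rewrite subr_ge0; apply: prodr_ile1 => c _; exact: q01.
field; apply/andP; split; rewrite lt0r_neq0 //; nra.
Qed.
Lemma frac_mono (R : realType) (a b : R) : 0 <= a -> a <= b -> a / (1 + a) <= b / (1 + b).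
Proof.
move=> ha hab; rewrite ler_pdivrMr; last lra.
rewrite mulrAC ler_pdivlMr; last lra.
nra.
Qed.

Lemma Fq_anti (R : realType) k D (x y : 'I_D.-1 -> 'I_k.-1 -> R) :
  (forall e c, 0 <= x e c <= y e c) -> (forall e c, y e c <= 1) -> Fq y <= Fq x.
Proof.
move=> Hxy Hy1; rewrite /Fq; apply: frac_mono.
  apply: prodr_ge0 => e _; rewrite subr_ge0; apply: prodr_ile1 => c _.
  have /andP [h1 h2] := Hxy e c; rewrite Hy1 andbT; exact: le_trans h1 h2.
apply: ler_prod => e _.
have h : \prod_c x e c <= \prod_c y e c by apply: ler_prod => c _; exact: Hxy.
have h' : \prod_c y e c <= 1.
  apply: prodr_ile1 => c _; have /andP [h1 h2] := Hxy e c.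
  rewrite Hy1 andbT; exact: le_trans h1 h2.
apply/andP; split; lra.
Qed.

Definition an (R : realType) k D n : R := qq R (k:=k) (D:=D) n (fun _ => true).
Definition bn (R : realType) k D n : R := qq R (k:=k) (D:=D) n (fun _ => false).

Lemma qconst (R : realType) k D n (b : bool) :
  qq R (k:=k) (D:=D) n.+1 (fun _ => b) = Fq (fun (_ : 'I_D.-1) (_ : 'I_k.-1) => qq R (k:=k) (D:=D) n (fun _ => b)).
Proof. by rewrite qrec. Qed.

Lemma interval (R : realType) k D n (g : seq (step k D) -> bool) :
  if odd n then an R k D n <= qq R n g <= bn R k D n
  else bn R k D n <= qq R n g <= an R k D n.
Proof.
elim: n g => [|n IH] g.
  rewrite /an /bn /qq !Mr0 !Nr0 /= !divr1.
  by case: (g [::]) => /=; rewrite ?lexx ?ler01.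
have Ha := q01 R (k:=k) (D:=D) n (fun _ => true).
have Hb := q01 R (k:=k) (D:=D) n (fun _ => false).
have Hx := fun e c => q01 R (k:=k) (D:=D) n (gs g e c).
rewrite /an /bn !qconst qrec /=.
move: IH; rewrite /an /bn; case: (odd n) => /= IH; apply/andP; split.
- apply: Fq_anti => [e c|e c]; last by have /andP [] := Hb.
  by have /andP [h1 h2] := Hx e c; have /andP [h3 h4] := IH (gs g e c); rewrite h1 h4.
- apply: Fq_anti => [e c|e c]; last by have /andP [] := Hx e c.
  by have /andP [h1 h2] := Ha; have /andP [h3 h4] := IH (gs g e c); rewrite h1 h3.
- apply: Fq_anti => [e c|e c]; last by have /andP [] := Ha.
  by have /andP [h1 h2] := Hx e c; have /andP [h3 h4] := IH (gs g e c); rewrite h1 h4.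
- apply: Fq_anti => [e c|e c]; last by have /andP [] := Hx e c.
  by have /andP [h1 h2] := Hb; have /andP [h3 h4] := IH (gs g e c); rewrite h1 h3.
Qed.

Lemma diff_le (R : realType) k D n (g g' : seq (step k D) -> bool) :
  `|qq R n g - qq R n g'| <= `|an R k D n - bn R k D n|.
Proof.
have := interval R n g; have := interval R n g'.
case: (odd n) => /andP [h1 h2] /andP [h3 h4].
  rewrite (distrC (an R k D n)); apply: le_trans (ler_norm _); rewrite ler_norml.
  apply/andP; split; lra.
apply: le_trans (ler_norm _); rewrite ler_norml; apply/andP; split; lra.
Qed.

Lemma qq_ext (R : realType) k D n (g g' : seq (step k D) -> bool) :
  (forall w, size w = n -> g w = g' w) -> qq R n g = qq R n g'.
Proof.
move=> Hg.
have E : forall I : {set vert k D n}, agreeW I g = agreeW I g'.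
  move=> I; apply/agreeWP/agreeWP => H w Hs; by rewrite H // Hg.
by rewrite /qq /Mr /Nr; congr (_ / _); apply: eq_bigr => I _; rewrite E.
Qed.

Lemma qtrue (R : realType) k D n :
  condprob R [ffun _ : vert k D n => true] = an R k D n.
Proof.
rewrite condprobE /an; apply: qq_ext => w Hs.
have Hw : w \in allw (step k D) n by rewrite mem_allw Hs.
by apply/existsP; exists (SeqSub Hw); rewrite ffunE eqxx.
Qed.

Lemma qfalse (R : realType) k D n :
  condprob R [ffun _ : vert k D n => false] = bn R k D n.
Proof.
rewrite condprobE /bn; apply: qq_ext => w Hs.
by apply/existsP => -[v]; rewrite ffunE andbF.
Qed.

Lemma maxdiffE (R : realType) k D n : maxdiff R k D n = `|an R k D n - bn R k D n|.
Proof.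
apply/le_anti/andP; split.
  apply: (big_ind (fun x => x <= _)); first exact: normr_ge0.
    by move=> x y hx hy; rewrite ge_max hx hy.
  move=> eta _.
  apply: (big_ind (fun x => x <= _)); first exact: normr_ge0.
    by move=> x y hx hy; rewrite ge_max hx hy.
  by move=> eta' _; rewrite !condprobE; exact: diff_le.
rewrite /maxdiff (bigD1 [ffun _ => true]) //= le_max; apply/orP; left.
rewrite (bigD1 [ffun _ => false]) //= le_max; apply/orP; left.
by rewrite qtrue qfalse.
Qed.

Lemma Fq_one (R : realType) k D : (2 <= D)%N -> Fq (fun (_ : 'I_D.-1) (_ : 'I_k.-1) => 1 : R) = 0.
Proof.
case: D => [|[|D]] // _; by rewrite /Fq big1_eq subrr (bigD1 ord0) //= !mul0r.
Qed.

Lemma ba (R : realType) k D n : (2 <= D)%N -> bn R k D n = an R k D n.+1.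
Proof.
move=> hD; elim: n => [|n IH].
  rewrite /an qconst.
  have -> : qq R (k:=k) (D:=D) 0 (fun _ => true) = 1 by rewrite /qq Mr0 Nr0 divr1.
  by rewrite Fq_one // /bn /qq Mr0 Nr0 divr1.
transitivity (Fq (fun (_ : 'I_D.-1) (_ : 'I_k.-1) => bn R k D n)); first by rewrite /bn qconst.
by rewrite IH [RHS]/an qconst.
Qed.

Theorem lemma55 (R : realType) (k D : nat) (hk : (2 <= k)%N) (hD : (2 <= D)%N) :
  uniqueness R k D <->
  limn_sup (fun n => `|pn R k D n.+1 - pn R k D n|) = 0.
Proof.
have E : (fun n => maxdiff R k D n) = (fun n => `|pn R k D n.+1 - pn R k D n|).
  apply: boolp.funext => n.
  by rewrite maxdiffE /pn !qtrue -ba // distrC.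
by rewrite /uniqueness E.
Qed.
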